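(* Let $E$ be a CM field that is a finite Galois extension of $\mathbb{Q}$ with Galois group $G$, with a fixed embedding $E\hookrightarrow\mathbb{C}$, and let $V$ be a finite-dimensional $E$-vector space. Let $\mathfrak{k}$ be a semisimple $\mathbb{Q}$-Lie subalgebra of $\mathfrak{sl}_E(V)$ and $\mathfrak{k}_\mathbb{C}=\mathfrak{k}\otimes_\mathbb{Q}\mathbb{C}$. Suppose: (I) there exists $\sigma_0\in G$ such that $P_{\sigma_0}(\mathfrak{k}_\mathbb{C})=\mathfrak{sl}_\mathbb{C}(V_{\sigma_0})$; (II) for each pair $(\sigma,\tau)\in G^2$ with $\sigma\neq\tau$ and $\sigma\neq\bar\tau$, there exists $\kappa\in G$ such that, with $\sigma_0=\kappa\sigma$, $\tau_0=\kappa\tau$, one has $P_{\sigma_0,\tau_0}(\mathfrak{k}_\mathbb{C})=\mathfrak{sl}_\mathbb{C}(V_{\sigma_0})\oplus\mathfrak{sl}_\mathbb{C}(V_{\tau_0})$. Then $\dim_\mathbb{Q}\mathfrak{k}\ge \frac12[E:\mathbb{Q}]\big((\dim_E V)^2-1\big)$.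
   Context: $V_\mathbb{C}=V\otimes_\mathbb{Q}\mathbb{C}=\bigoplus_{\sigma\in G}V_\sigma$, where (identifying $\sigma\in G$ with the embedding $E\xrightarrow{\sigma}E\subset\mathbb{C}$) $V_\sigma=\{w\in V_\mathbb{C}:(e\otimes1)w=\sigma(e)w\ \forall e\in E\}$. For a commutative ring $R$ and free $R$-module $N$ of finite rank, $\mathfrak{sl}_R(N)$ is the Lie algebra of trace-zero $R$-endomorphisms. One has $\mathfrak{sl}_E(V)\otimes_\mathbb{Q}\mathbb{C}=\bigoplus_{\sigma\in G}\mathfrak{sl}_\mathbb{C}(V_\sigma)$; $P_\sigma$ denotes the projection onto $\mathfrak{sl}_\mathbb{C}(V_\sigma)$ and, for $\sigma\ne\tau$, $P_{\sigma,\tau}$ the projection onto $\mathfrak{sl}_\mathbb{C}(V_\sigma)\oplus\mathfrak{sl}_\mathbb{C}(V_\tau)$. For $\sigma\in G$, $\bar\sigma$ denotes the composition of $\sigma$ with complex conjugation of $E$. *)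

(* Defs.v *)
From HB Require Import structures.
From mathcomp Require Import all_boot all_order all_algebra all_fingroup all_field.
Set Implicit Arguments. Unset Strict Implicit. Unset Printing Implicit Defensive.
Import Order.TTheory GRing.Theory Num.Theory.
Local Open Scope ring_scope.

Definition totally_real (F : fieldType) : Prop :=
  forall phi : {rmorphism F -> algC}, forall x : F, phi x \is Num.real.

Definition totally_imaginary (E : fieldType) : Prop :=
  forall phi : {rmorphism E -> algC}, exists x : E, phi x \isn't Num.real.

Definition CM_field (E : fieldExtType rat) : Prop :=
  totally_imaginary E /\
  exists F : {subfield E}, (\dim_F {:E})%N = 2%N /\ totally_real (subvs_of F).

Section Lie.
Variables (E : fieldType) (n : nat).
Local Notation M := 'M[E]_n.

Definition lie_br (X Y : M) : M := X *m Y - Y *m X.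

Definition in_Qspan d (b : 'I_d -> M) (X : M) : Prop :=
  exists c : 'I_d -> rat, X = \sum_(i < d) (ratr (c i) : E) *: b i.

Definition Q_free d (b : 'I_d -> M) : Prop :=
  forall c : 'I_d -> rat,
    \sum_(i < d) (ratr (c i) : E) *: b i = 0 -> forall i, c i = 0.

Definition Qsubspace (I : M -> Prop) : Prop :=
  [/\ I 0, (forall X Y, I X -> I Y -> I (X + Y))
         & (forall (q : rat) X, I X -> I ((ratr q : E) *: X))].

Definition lie_ideal (k I : M -> Prop) : Prop :=
  [/\ Qsubspace I, (forall X, I X -> k X)
         & (forall X Y, k X -> I Y -> I (lie_br X Y))].

(* derived algebra [I, I] (span of brackets; sums suffice as I is a
   Q-subspace) *)
Definition derived (I : M -> Prop) : M -> Prop :=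
  fun X => exists s : seq (M * M),
    (forall p, p \in s -> I p.1 /\ I p.2) /\
    X = \sum_(p <- s) lie_br p.1 p.2.

Definition lie_solvable (I : M -> Prop) : Prop :=
  exists m : nat, forall X, iter m derived I X -> X = 0.

Definition lie_semisimple (k : M -> Prop) : Prop :=
  forall I, lie_ideal k I -> lie_solvable I -> forall X, I X -> X = 0.

End Lie.

(* For an embedding phi : E -> C, the component of X \in sl_E(E^n) in
   sl_C(V_phi) (with the basis of V_phi induced by the standard basis of E^n)
   is the matrix map_mx phi X. *)

(* P_phi(k_C) = sl_C(V_phi), where k has Q-basis b *)
Definition proj1_full (E : fieldType) (n d : nat) (b : 'I_d -> 'M[E]_n)
    (phi : E -> algC) : Prop :=
  forall Y : 'M[algC]_n,
    \tr Y = 0 <-> exists c : 'I_d -> algC,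
                    Y = \sum_(i < d) c i *: map_mx phi (b i).

(* P_{phi,psi}(k_C) = sl_C(V_phi) (+) sl_C(V_psi) *)
Definition proj2_full (E : fieldType) (n d : nat) (b : 'I_d -> 'M[E]_n)
    (phi psi : E -> algC) : Prop :=
  forall Y1 Y2 : 'M[algC]_n,
    (\tr Y1 = 0 /\ \tr Y2 = 0) <->
    exists c : 'I_d -> algC,
      Y1 = \sum_(i < d) c i *: map_mx phi (b i) /\
      Y2 = \sum_(i < d) c i *: map_mx psi (b i).

(* Main.v *)
Require Import Defs.
From HB Require Import structures.
From mathcomp Require Import all_boot all_order all_algebra all_fingroup all_field.
From Stdlib Require Import ClassicalEpsilon Classical.
Import GRing.Theory Num.Theory.
Local Open Scope ring_scope.

Module Aux.
Set Implicit Arguments. Unset Strict Implicit. Unset Printing Implicit Defensive.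

Section Perf.
Variables (F : fieldType) (n : nat).
Local Notation M := 'M[F]_n.

Definition brspan (X : M) : Prop := exists ps : seq (M * M),
  (forall p, p \in ps -> \tr p.1 = 0 /\ \tr p.2 = 0) /\
  X = \sum_(p <- ps) lie_br p.1 p.2.

Lemma brspan0 : brspan 0.
Proof. by exists [::]; split => //; rewrite big_nil. Qed.

Lemma brspanD X Y : brspan X -> brspan Y -> brspan (X + Y).
Proof.
move=> [p [Hp ->]] [q [Hq ->]]; exists (p ++ q); split; last by rewrite big_cat.
by move=> x; rewrite mem_cat => /orP[/Hp|/Hq].
Qed.

Lemma lie_brZl a (X Y : M) : lie_br (a *: X) Y = a *: lie_br X Y.
Proof. by rewrite /lie_br -scalemxAl -scalemxAr scalerBr. Qed.

Lemma brspanZ a X : brspan X -> brspan (a *: X).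
Proof.
move=> [p [Hp ->]]; exists [seq (a *: q.1, q.2) | q <- p]; split.
  move=> x /mapP[q /Hp [h1 h2] ->] /=; by rewrite mxtraceZ h1 mulr0.
rewrite big_map scaler_sumr; apply: eq_bigr => q _ /=; by rewrite lie_brZl.
Qed.

Lemma brspan_sum (I : Type) (r : seq I) (f : I -> M) :
  (forall i, brspan (f i)) -> brspan (\sum_(i <- r) f i).
Proof.
move=> H; elim: r => [|i r IH]; first by rewrite big_nil; exact: brspan0.
by rewrite big_cons; apply: brspanD.
Qed.

Lemma tr_delta (i j : 'I_n) : \tr (delta_mx i j : M) = (i == j)%:R.
Proof.
rewrite /mxtrace (bigD1 i) //= mxE eqxx /= big1 ?addr0 //.
by move=> k /negPf nk; rewrite mxE nk.
Qed.

Hypothesis two : (2%:R : F) != 0.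

Lemma brspan_off (i j : 'I_n) : i != j -> brspan (delta_mx i j).
Proof.
move=> nij; exists [:: ((2%:R)^-1 *: delta_mx i j, delta_mx j j - delta_mx i i)].
split.
  move=> p; rewrite inE => /eqP -> /=.
  by rewrite mxtraceZ raddfB /= !tr_delta (negPf nij) !eqxx mulr0 subrr.
rewrite big_seq1 /= lie_brZl /lie_br mulmxBr mulmxBl mul_delta_mx.
have nji : j != i by rewrite eq_sym.
rewrite !(mul_delta_mx_0 _ _ _ nji) mul_delta_mx.
rewrite !subr0 sub0r opprK -mulr2n -scaler_nat scalerA mulVf // scale1r //.
Qed.

Lemma brspan_diag (i j : 'I_n) : i != j -> brspan (delta_mx i i - delta_mx j j).
Proof.
move=> nij; exists [:: (delta_mx i j, delta_mx j i)]; split.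
  by move=> p; rewrite inE => /eqP -> /=; rewrite !tr_delta (negPf nij) eq_sym (negPf nij).
by rewrite big_seq1 /= /lie_br !mul_delta_mx.
Qed.

Lemma perfect (X : M) : \tr X = 0 -> brspan X.
Proof.
move=> trX; case: (posnP n) => [n0|npos].
  suff -> : X = 0 by exact: brspan0.
  apply/matrixP => i; move: (ltn_ord i).
  by rewrite {2}n0.
set i0 := Ordinal npos.
rewrite [X]matrix_sum_delta.
have -> : \sum_(i < n) \sum_(j < n) X i j *: delta_mx i j =
  \sum_(i < n) \sum_(j < n) (if i == j then X i i *: (delta_mx i i - delta_mx i0 i0)
                                   else X i j *: delta_mx i j)
  + (\sum_(i < n) X i i) *: delta_mx i0 i0.
  rewrite scaler_suml -big_split /=; apply: eq_bigr => i _.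
  rewrite (bigD1 i) //= [in RHS](bigD1 i) //= eqxx.
  rewrite scalerBr -!addrA; congr (_ + _).
  rewrite addrC -addrA [_ + - _]addrC subrr addr0.
  apply: eq_bigr => j nj; by rewrite eq_sym (negPf nj).
have -> : \sum_(i < n) X i i = \tr X by [].
rewrite trX scale0r addr0; apply: brspan_sum => i; apply: brspan_sum => j.
case: ifP => [_|/negbT nij]; last by apply: brspanZ; apply: brspan_off.
apply: brspanZ; case: (eqVneq i i0) => [->|ni]; first by rewrite subrr; exact: brspan0.
exact: brspan_diag.
Qed.
End Perf.
Lemma ffunDE' (I : finType) (R : pzRingType) (V : lmodType R) (f g : {ffun I -> V}) a : (f + g) a = f a + g a.
Proof. exact: ffunE. Qed.
Lemma ffunZE' (I : finType) (R : pzRingType) (V : lmodType R) c (f : {ffun I -> V}) a : (c *: f) a = c *: f a.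
Proof. exact: ffunE. Qed.
Lemma ffun0E' (I : finType) (R : pzRingType) (V : lmodType R) a : (0 : {ffun I -> V}) a = 0.
Proof. exact: ffunE. Qed.

Definition trk (E : fieldType) (n k : nat) (g : {ffun 'I_k -> 'M[E]_n}) : 'rV[E]_k :=
  \row_a \tr (g a).

Fact trk_linear (E : fieldType) (n k : nat) : linear (@trk E n k).
Proof.
move=> c g h; apply/rowP => a; by rewrite !mxE ffunDE' ffunZE' raddfD /= mxtraceZ.
Qed.

HB.instance Definition _ (E : fieldType) (n k : nat) :=
  GRing.isLinear.Build E {ffun 'I_k -> 'M[E]_n} 'rV[E]_k _ (@trk E n k) (@trk_linear E n k).

Section Count.
Variables (E : fieldType) (n k : nat).
Hypothesis npos : (0 < n)%N.
Local Notation V := {ffun 'I_k -> 'M[E]_n}.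

Lemma dim_sl_tuple : \dim (lker (linfun (@trk E n k))) = (k * (n * n) - k)%N.
Proof.
have := limg_ker_dim (linfun (@trk E n k)) fullv.
rewrite capfv dimvf.
have -> : ((linfun (@trk E n k)) @: fullv)%VS = fullv.
  apply/eqP; rewrite eqEsubv subvf /=; apply/subvP => r _.
  pose g : V := [ffun a => r 0 a *: delta_mx (Ordinal npos) (Ordinal npos)].
  have -> : r = linfun (@trk E n k) g.
    apply/rowP => a; rewrite lfunE /= /trk mxE ffunE mxtraceZ.
    rewrite /mxtrace (bigD1 (Ordinal npos)) //= mxE eqxx big1 ?addr0 ?mulr1 //.
    by move=> i /negPf ni; rewrite mxE ni.
  by rewrite memv_img ?memvf.
rewrite dimvf /=. 
have -> : dim V = (k * (n * n))%N.
  by change ((#|'I_k| * dim 'M[E]_n) = k * (n * n))%N; rewrite card_ord dim_matrix.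
by rewrite dim_matrix mul1r => <-; rewrite addnK.
Qed.
End Count.

Section Core.
Variables (E : fieldType) (n d k : nat) (b : 'I_d -> 'M[E]_n)
  (f : 'I_k -> {rmorphism E -> E}).
Local Notation M := 'M[E]_n.
Local Notation V := {ffun 'I_k -> 'M[E]_n}.

Definition W i : V := [ffun a => map_mx (f a) (b i)].
Definition inh (g : V) := exists c : 'I_d -> E, g = \sum_i c i *: W i.
Definition brf (g h : V) : V := [ffun a => lie_br (g a) (h a)].

Lemma inh0 : inh 0.
Proof. by exists (fun _ => 0); rewrite big1 // => i _; rewrite scale0r. Qed.

Lemma inhD g h : inh g -> inh h -> inh (g + h).
Proof.
move=> [c ->] [c' ->]; exists (fun i => c i + c' i); rewrite -big_split /=.
by apply: eq_bigr => i _; rewrite scalerDl.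
Qed.

Lemma inhZ a g : inh g -> inh (a *: g).
Proof.
move=> [c ->]; exists (fun i => a * c i); rewrite scaler_sumr.
by apply: eq_bigr => i _; rewrite scalerA.
Qed.

Lemma inh_sum (I : Type) (r : seq I) (F : I -> V) :
  (forall i, inh (F i)) -> inh (\sum_(i <- r) F i).
Proof.
move=> H; elim: r => [|i r IH]; first by rewrite big_nil; exact: inh0.
by rewrite big_cons; apply: inhD.
Qed.

Lemma inhW i : inh (W i).
Proof.
exists (fun j => (j == i)%:R); rewrite (bigD1 i) //= eqxx scale1r big1 ?addr0 //.
by move=> j /negPf ->; rewrite scale0r.
Qed.

Lemma lie_br_suml (I : Type) (r : seq I) (F : I -> M) (Y : M) :
  lie_br (\sum_(i <- r) F i) Y = \sum_(i <- r) lie_br (F i) Y.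
Proof. by rewrite /lie_br mulmx_suml mulmx_sumr -sumrB. Qed.

Lemma lie_br_sumr (I : Type) (r : seq I) (F : I -> M) (Y : M) :
  lie_br Y (\sum_(i <- r) F i) = \sum_(i <- r) lie_br Y (F i).
Proof. by rewrite /lie_br mulmx_suml mulmx_sumr -sumrB. Qed.

Lemma lie_brZr a (X Y : M) : lie_br X (a *: Y) = a *: lie_br X Y.
Proof. by rewrite /lie_br -scalemxAl -scalemxAr scalerBr. Qed.

Hypothesis brQ : forall i j, in_Qspan b (lie_br (b i) (b j)).

Lemma inh_brW i j : inh (brf (W i) (W j)).
Proof.
have [q Hq] := brQ i j.
have -> : brf (W i) (W j) = \sum_l (ratr (q l) : E) *: W l.
  apply/ffunP => a; rewrite ffunE sum_ffunE !ffunE.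
  rewrite /lie_br -!map_mxM -map_mxB -/(lie_br _ _) Hq.
  rewrite raddf_sum /=; apply: eq_big => // l _.   by rewrite (map_mxZ (f a)) fmorph_rat ffunZE' ffunE.
by apply: inh_sum => l; apply: inhZ; apply: inhW.
Qed.

Lemma inh_brf g h : inh g -> inh h -> inh (brf g h).
Proof.
move=> [c ->] [c' ->].
have -> : brf (\sum_i c i *: W i) (\sum_j c' j *: W j) =
    \sum_i \sum_j (c i * c' j) *: brf (W i) (W j).
  apply/ffunP => a; rewrite ffunE !sum_ffunE lie_br_suml.
  apply: eq_bigr; move=> i _; rewrite sum_ffunE lie_br_sumr.
  apply: eq_bigr; move=> j _.
  by rewrite !ffunZE' lie_brZl lie_brZr scalerA !ffunE.
by apply: inh_sum => i; apply: inh_sum => j; apply: inhZ; apply: inh_brW.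
Qed.

Lemma W_eval (c : 'I_d -> E) a :
  (\sum_i c i *: W i) a = \sum_i c i *: map_mx (f a) (b i).
Proof. rewrite sum_ffunE; apply: eq_bigr; move=> i _; by rewrite ffunZE' ffunE. Qed.

Lemma lie_br0r (X : M) : lie_br X 0 = 0.
Proof. by rewrite /lie_br mulmx0 mul0mx subrr. Qed.
Lemma lie_br0l (X : M) : lie_br 0 X = 0.
Proof. by rewrite /lie_br mulmx0 mul0mx subrr. Qed.

Hypothesis two : (2%:R : E) != 0.
Hypothesis surj1 : forall a (X : M), \tr X = 0 ->
  exists c : 'I_d -> E, X = \sum_i c i *: map_mx (f a) (b i).
Hypothesis surj2 : forall a t, a != t -> forall X Y : M, \tr X = 0 -> \tr Y = 0 ->
  exists c : 'I_d -> E, X = \sum_i c i *: map_mx (f a) (b i) /\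
                         Y = \sum_i c i *: map_mx (f t) (b i).

Lemma kill a (s : seq 'I_k) : a \notin s -> forall X : M, \tr X = 0 ->
  exists g, [/\ inh g, g a = X & forall t, t \in s -> g t = 0].
Proof.
elim: s => [|t s IH] Hs X trX.
  have [c ->] := surj1 a trX; exists (\sum_i c i *: W i); split => //.
    by exists c.
  by rewrite W_eval.
move: Hs; rewrite inE negb_or => /andP[hat Hs].
have [ps [Hps ->]] := perfect two trX.
elim: ps Hps => [|p ps IHp] Hps.
  exists 0; split; first exact: inh0.
    by rewrite ffun0E' big_nil.
  by move=> u _; rewrite ffun0E'.
have [|g0 [ig0 g0a g0z]] := IHp.
  by move=> x xin; apply: Hps; rewrite inE xin orbT.
have [tr1 tr2] := Hps p (mem_head _ _).
have [g1 [ig1 g1a g1z]] := IH Hs _ tr1.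
have tr0 : \tr (0 : M) = 0 by rewrite raddf0.
have [c [h1a h1t]] := surj2 hat tr2 tr0.
set h1 := \sum_i c i *: W i.
exists (brf g1 h1 + g0); split.
- by apply: inhD => //; apply: inh_brf => //; exists c.
- by rewrite ffunDE' ffunE g0a big_cons g1a W_eval -h1a.
move=> u; rewrite inE => /orP[/eqP ->|us].
  by rewrite ffunDE' ffunE W_eval -h1t lie_br0r g0z ?mem_head // addr0.
by rewrite ffunDE' ffunE g1z // lie_br0l g0z ?inE ?us ?orbT // addr0.
Qed.

Lemma allin (F : V) : (forall a, \tr (F a) = 0) -> inh F.
Proof.
move=> trF.
suff [g [ig Hg]] : exists g, inh g /\ forall t, g t = if t \in enum 'I_k then F t else 0.
  by have -> : F = g by apply/ffunP => t; rewrite Hg mem_enum.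
elim: (enum 'I_k) => [|a r [g [ig Hg]]].
  by exists 0; split; [exact: inh0 | move=> t; rewrite ffun0E'].
case: (boolP (a \in r)) => ar.
  exists g; split => // t; rewrite Hg inE; case: eqP => [->|]; by rewrite ?ar.
have Hn : a \notin [seq t <- enum 'I_k | t != a] by rewrite mem_filter eqxx.
have [e [ie ea ez]] := kill Hn (trF a).
exists (g + e); split; first exact: inhD.
move=> t; rewrite ffunDE' Hg inE; case: (eqVneq t a) => [->|nta] /=.
  by rewrite (negPf ar) ea add0r.
by rewrite ez ?addr0 // mem_filter nta mem_enum.
Qed.

Lemma dim_bound : (0 < n)%N -> (k * (n * n) - k <= d)%N.
Proof.
move=> npos; rewrite -(dim_sl_tuple E k npos).
apply: (@leq_trans (\dim <<[seq W i | i <- enum 'I_d]>>%VS)); last first.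
  by apply: leq_trans (dim_span _) _; rewrite size_map size_enum_ord.
apply: dimvS; apply/subvP => g; rewrite memv_ker => /eqP Hg.
have [c ->] : inh g.
  apply: allin => a; move/rowP: Hg => /(_ a); by rewrite lfunE /= /trk !mxE.
apply: memv_suml => i _; apply: memvZ; apply: memv_span.
by apply: map_f; rewrite mem_enum.
Qed.
End Core.

Lemma sum_row_mx' (R : pzRingType) (I : Type) (r : seq I) m n1 n2
  (F : I -> 'M[R]_(m, n1)) (G : I -> 'M[R]_(m, n2)) :
  \sum_(i <- r) row_mx (F i) (G i) = row_mx (\sum_(i <- r) F i) (\sum_(i <- r) G i).
Proof.
elim: r => [|i r IH]; first by rewrite !big_nil row_mx0.
by rewrite !big_cons IH add_row_mx.
Qed.

Lemma mul_rowB (K : pzRingType) n d (A1 A2 : 'I_d -> 'M[K]_n) (D : 'rV[K]_d) :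
  D *m (\matrix_i row_mx (mxvec (A1 i)) (mxvec (A2 i))) =
  row_mx (mxvec (\sum_i D 0 i *: A1 i)) (mxvec (\sum_i D 0 i *: A2 i)).
Proof.
rewrite mulmx_sum_row !linear_sum /= -sum_row_mx'; apply: eq_bigr => i _.
by rewrite rowK scale_row_mx !linearZ.
Qed.

Lemma mul_rowB1 (K : pzRingType) n d (A1 : 'I_d -> 'M[K]_n) (D : 'rV[K]_d) :
  D *m (\matrix_i mxvec (A1 i)) = mxvec (\sum_i D 0 i *: A1 i).
Proof.
rewrite mulmx_sum_row !linear_sum /=; apply: eq_bigr => i _.
by rewrite rowK linearZ.
Qed.

Section Conv.
Variables (E : fieldType) (iota : {rmorphism E -> algC}) (n d : nat)
  (b : 'I_d -> 'M[E]_n) (phi psi : {rmorphism E -> E}).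

Lemma conv2 : proj2_full b (fun x => iota (phi x)) (fun x => iota (psi x)) ->
  forall X Y : 'M[E]_n, \tr X = 0 -> \tr Y = 0 ->
  exists c : 'I_d -> E, X = \sum_i c i *: map_mx phi (b i) /\
                         Y = \sum_i c i *: map_mx psi (b i).
Proof.
move=> H X Y trX trY.
pose B := \matrix_i row_mx (mxvec (map_mx phi (b i))) (mxvec (map_mx psi (b i))).
have trX' : \tr (map_mx iota X) = 0 by rewrite trace_map_mx trX rmorph0.
have trY' : \tr (map_mx iota Y) = 0 by rewrite trace_map_mx trY rmorph0.
have [c [h1 h2]] := (H _ _).1 (conj trX' trY').
have : (row_mx (mxvec X) (mxvec Y) <= B)%MS.
  rewrite -(map_submx iota); apply/submxP; exists (\row_i c i).
  have -> : map_mx iota B = \matrix_i row_mx (mxvec (map_mx (fun x => iota (phi x)) (b i)))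
                                   (mxvec (map_mx (fun x => iota (psi x)) (b i))).
    apply/row_matrixP => i; rewrite -map_row !rowK map_row_mx !map_mxvec.
    by rewrite -!map_mx_comp.
  by rewrite mul_rowB map_row_mx !map_mxvec h1 h2; congr (row_mx (mxvec _) (mxvec _));
    apply: eq_bigr => i _; rewrite mxE.
move/submxP => [D]; rewrite mul_rowB => /eq_row_mx [/(can_inj mxvecK) -> /(can_inj mxvecK) ->].
by exists (fun i => D 0 i).
Qed.

Lemma conv1 : proj1_full b (fun x => iota (phi x)) ->
  forall X : 'M[E]_n, \tr X = 0 ->
  exists c : 'I_d -> E, X = \sum_i c i *: map_mx phi (b i).
Proof.
move=> H X trX.
pose B := \matrix_i mxvec (map_mx phi (b i)).
have trX' : \tr (map_mx iota X) = 0 by rewrite trace_map_mx trX rmorph0.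
have [c h1] := (H _).1 trX'.
have : (mxvec X <= B)%MS.
  rewrite -(map_submx iota); apply/submxP; exists (\row_i c i).
  have -> : map_mx iota B = \matrix_i mxvec (map_mx (fun x => iota (phi x)) (b i)).
    apply/row_matrixP => i; rewrite -map_row !rowK !map_mxvec.
    by rewrite -!map_mx_comp.
  by rewrite mul_rowB1 map_mxvec h1; congr (mxvec _);
    apply: eq_bigr => i _; rewrite mxE.
move/submxP => [D]; rewrite mul_rowB1 => /(can_inj mxvecK) ->.
by exists (fun i => D 0 i).
Qed.
End Conv.

Section Canc.
Variables (E : fieldType) (n d : nat) (b : 'I_d -> 'M[E]_n)
  (rho rhoi : {rmorphism E -> E}) (rhoK : forall x, rhoi (rho x) = x).

Lemma canc_map (phi' phi : E -> E) (c : 'I_d -> E) :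
  (forall x, phi' x = rho (phi x)) ->
  map_mx rhoi (\sum_i c i *: map_mx phi' (b i)) = \sum_i rhoi (c i) *: map_mx phi (b i).
Proof.
move=> Hp; rewrite map_mx_sum; apply: eq_bigr => i _; rewrite map_mxZ -map_mx_comp.
by congr (_ *: _); apply: eq_map_mx => x /=; rewrite Hp rhoK.
Qed.

Lemma canc_tr (X : 'M[E]_n) : \tr X = 0 -> \tr (map_mx rho X) = 0.
Proof. by move=> h; rewrite trace_map_mx h rmorph0. Qed.

Lemma canc_back (X : 'M[E]_n) : X = map_mx rhoi (map_mx rho X).
Proof. by rewrite -map_mx_comp map_mx_id // => x /=; rewrite rhoK. Qed.

Lemma cancel2 (phi' psi' phi psi : E -> E) :
  (forall x, phi' x = rho (phi x)) -> (forall x, psi' x = rho (psi x)) ->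
  (forall X Y : 'M[E]_n, \tr X = 0 -> \tr Y = 0 ->
    exists c : 'I_d -> E, X = \sum_i c i *: map_mx phi' (b i) /\
                           Y = \sum_i c i *: map_mx psi' (b i)) ->
  forall X Y : 'M[E]_n, \tr X = 0 -> \tr Y = 0 ->
    exists c : 'I_d -> E, X = \sum_i c i *: map_mx phi (b i) /\
                           Y = \sum_i c i *: map_mx psi (b i).
Proof.
move=> Hp Hq H X Y trX trY.
have [c [h1 h2]] := H _ _ (canc_tr trX) (canc_tr trY).
exists (fun i => rhoi (c i)); split.
  by rewrite [LHS]canc_back h1 (canc_map _ Hp).
by rewrite [LHS]canc_back h2 (canc_map _ Hq).
Qed.

Lemma cancel1 (phi' phi : E -> E) :
  (forall x, phi' x = rho (phi x)) ->
  (forall X : 'M[E]_n, \tr X = 0 ->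
    exists c : 'I_d -> E, X = \sum_i c i *: map_mx phi' (b i)) ->
  forall X : 'M[E]_n, \tr X = 0 ->
    exists c : 'I_d -> E, X = \sum_i c i *: map_mx phi (b i).
Proof.
move=> Hp H X trX.
have [c h1] := H _ (canc_tr trX).
exists (fun i => rhoi (c i)).
by rewrite [LHS]canc_back h1 (canc_map _ Hp).
Qed.
End Canc.

Section Sel.
Variables (E : splittingFieldType rat) (iota : {rmorphism E -> algC}).
Local Notation gT := (gal_of {:E}).

Definition gm (s : gT) : {rmorphism E -> E} := gal_repr s.

Lemma gmE (s : gT) x : gm s x = s x. Proof. by []. Qed.

Definition cj (s t : gT) : Prop := forall x, iota (t x) = (iota (s x))^*.
Definition cjb s t : bool := if excluded_middle_informative (cj s t) then true else false.
Lemma cjbP s t : cjb s t -> cj s t.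
Proof. by rewrite /cjb; case: excluded_middle_informative. Qed.
Lemma cjbI s t : cj s t -> cjb s t.
Proof. by rewrite /cjb; case: excluded_middle_informative. Qed.

Lemma cj_sym s t : cj s t -> cj t s.
Proof. by move=> h x; rewrite h conjCK. Qed.

Lemma cj_uniq s t t' : cj s t -> cj s t' -> t = t'.
Proof.
move=> h h'; apply/eqP/gal_eqP => x _; apply: (fmorph_inj iota).
by rewrite h h'.
Qed.

Lemma inG (s : gT) : s \in 'Gal({:E} / 1)%g.
Proof. by rewrite gal_kHom ?sub1v // k1HomE; exact: ahomWin. Qed.

Definition rk (s : gT) : nat := enum_rank s.
Definition Ssel : {set gT} := [set s | [forall t, cjb s t ==> (rk s <= rk t)%N]].

Lemma Ssel_ok s t : s \in Ssel -> t \in Ssel -> s != t ->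
  exists x, iota (s x) != (iota (t x))^*.
Proof.
move=> sS tS nst; case: (classic (exists x, iota (s x) != (iota (t x))^*)) => // Hn.
have cts : cj t s.
  move=> x; apply/eqP; apply: contraT => hx; case: Hn; by exists x.
have cst := cj_sym cts.
move: sS tS; rewrite !inE => /forallP /(_ t) /implyP /(_ (cjbI cst)) h1.
move=> /forallP /(_ s) /implyP /(_ (cjbI cts)) h2.
have : rk s = rk t by apply/eqP; rewrite eqn_leq h1 h2.
by move/val_inj/(can_inj enum_rankK) => est; rewrite est eqxx in nst.
Qed.

Lemma card_Ssel : (#|{: gT}| <= 2 * #|Ssel|)%N.
Proof.
pose p (s : gT) := odflt s [pick t | cjb s t && (rk t < rk s)%N].
have Hp : forall s, s \in ~: Ssel -> cj s (p s) /\ (rk (p s) < rk s)%N.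
  move=> s; rewrite !inE negb_forall => /existsP [t]; rewrite negb_imply -ltnNge => ht.
  rewrite /p; case: pickP => [u /andP[/cjbP h1 h2]|/(_ t)]; first by [].
  by rewrite ht.
have pS : forall s, s \in ~: Ssel -> p s \in Ssel.
  move=> s /Hp [h1 h2]; rewrite inE; apply/forallP => u; apply/implyP => /cjbP h.
  by rewrite (cj_uniq h (cj_sym h1)) ltnW.
have pinj : {in ~: Ssel &, injective p}.
  move=> s s' /Hp [h1 _] /Hp [h1' _] e.
  apply: (cj_uniq (cj_sym h1)); rewrite e; exact: cj_sym.
have : (#|~: Ssel| <= #|Ssel|)%N.
  rewrite -(card_in_imset pinj); apply: subset_leq_card; apply/subsetP => u.
  by move/imsetP => [s sS ->]; apply: pS.
by rewrite -(cardsC Ssel) mul2n -addnn leq_add2l.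
Qed.
End Sel.

End Aux.
Import Aux.

Theorem lemma2p2 (E : splittingFieldType rat)
    (iota : {rmorphism E -> algC})
    (n d : nat) (b : 'I_d -> 'M[E]_n) :
  galois 1%VS {:E} ->
  CM_field E ->
  (* k := Q-span of b, a Q-basis *)
  Q_free b ->
  (forall i, \tr (b i) = 0) ->
  (forall i j, in_Qspan b (lie_br (b i) (b j))) ->
  lie_semisimple (in_Qspan b) ->
  (* (I) *)
  (exists2 s0, s0 \in 'Gal({:E} / 1%VS)%g & proj1_full b (fun x => iota (s0 x))) ->
  (* (II) *)
  (forall s t, s \in 'Gal({:E} / 1%VS)%g -> t \in 'Gal({:E} / 1%VS)%g ->
     s != t ->
     (exists x : E, iota (s x) != (iota (t x))^*) ->
     exists2 kap, kap \in 'Gal({:E} / 1%VS)%g &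
       proj2_full b (fun x => iota ((s * kap)%g x))
                    (fun x => iota ((t * kap)%g x))) ->
  (2 * d >= \dim {:E} * (n ^ 2 - 1))%N.
Proof.
move=> Hgal _ _ trb brQ _ [s0 _ H1] H2.
case: (posnP n) => [->|npos]; first by rewrite muln0.
pose S := Ssel iota.
pose k := #|S|.
pose f (a : 'I_k) : {rmorphism E -> E} := gm (enum_val a).
have two : (2%:R : E) != 0.
  by rewrite -(rmorph_nat (in_alg E)) fmorph_eq0 pnatr_eq0.
have rhoK : forall (r : gal_of {:E}) x, gm (r^-1)%g (gm r x) = x.
  by move=> r x; rewrite !gmE -galM ?memvf // mulgV gal_id.
have surj1 : forall a (X : 'M[E]_n), \tr X = 0 ->
    exists c : 'I_d -> E, X = \sum_i c i *: map_mx (f a) (b i).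
  move=> a; set s := enum_val a.
  apply: (cancel1 (rho := gm (s^-1 * s0)%g) (rhoK _) (phi' := gm s0)).
    by move=> x; rewrite !gmE -galM ?memvf // mulKVg.
  exact: conv1.
have surj2 : forall a t, a != t -> forall X Y : 'M[E]_n, \tr X = 0 -> \tr Y = 0 ->
    exists c : 'I_d -> E, X = \sum_i c i *: map_mx (f a) (b i) /\
                           Y = \sum_i c i *: map_mx (f t) (b i).
  move=> a t nat'; set s := enum_val a; set u := enum_val t.
  have nsu : s != u by apply: contra nat' => /eqP /enum_val_inj ->.
  have [kap _ Hk] := H2 s u (inG s) (inG u) nsu
     (Ssel_ok (enum_valP a) (enum_valP t) nsu).
  apply: (cancel2 (rho := gm kap) (rhoK _) (phi' := gm (s * kap)%g) (psi' := gm (u * kap)%g)).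
  - by move=> x; rewrite !gmE galM ?memvf.
  - by move=> x; rewrite !gmE galM ?memvf.
  exact: conv2.
have := dim_bound brQ two surj1 surj2 npos.
have hG := galois_dim Hgal; rewrite dimv1 divn1 in hG.
rewrite hG.
have hc := card_Ssel iota.
have hGc : (#|'Gal({:E} / 1)%g| <= 2 * k)%N by apply: leq_trans (max_card _) hc.
move=> hd.
apply: leq_trans (leq_mul hGc (leqnn (n ^ 2 - 1))) _.
rewrite -mulnA leq_mul2l; apply/orP; right.
by rewrite mulnBr muln1.
Qed.
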